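(* Let $R$ be a ring with Jacobson radical $J$, and let $M$ be an RD-regular left $R$-module. Then $JM=0$; and if moreover $R$ is semilocal, then $M$ is semisimple.
   Context: A short exact sequence of left $R$-modules is RD-pure if it remains exact after tensoring with every right module of the form $R/rR$, $r\in R$; a submodule is an RD-submodule if the inclusion gives an RD-pure exact sequence. A left module is RD-regular if all of its submodules are RD-submodules. *)

(* Defs.v *)
From mathcomp Require Import all_boot all_order all_algebra.
Set Implicit Arguments. Unset Strict Implicit. Unset Printing Implicit Defensive.
Import GRing.Theory.
Local Open Scope ring_scope.

Definition submod (R : nzRingType) (M : lmodType R) (N : M -> Prop) : Prop :=
  [/\ N 0, (forall x y, N x -> N y -> N (x + y)) &
      (forall (r : R) x, N x -> N (r *: x))].

Definition left_ideal (R : nzRingType) (I : R -> Prop) : Prop :=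
  [/\ I 0, (forall x y, I x -> I y -> I (x + y)) &
      (forall r x, I x -> I (r * x))].

Definition maximal_left_ideal (R : nzRingType) (I : R -> Prop) : Prop :=
  [/\ left_ideal I, ~ I 1 &
      forall K : R -> Prop, left_ideal K -> (forall x, I x -> K x) ->
        (forall x, K x <-> I x) \/ K 1].

Definition jacobson (R : nzRingType) (a : R) : Prop :=
  forall I : R -> Prop, maximal_left_ideal I -> I a.

(* N is an RD-submodule of M: the sequence 0 -> N -> M -> M/N -> 0 stays exact
   after tensoring with R/rR for every r.  Using (R/rR) (x) X = X/rX and right
   exactness of the tensor product, this says exactly that the induced map
   N/rN -> M/rM is injective, i.e. N \cap rM \subseteq rN. *)
Definition RD_submod (R : nzRingType) (M : lmodType R) (N : M -> Prop) : Prop :=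
  forall (r : R) (x : M), N x -> (exists m : M, x = r *: m) ->
    exists n : M, N n /\ x = r *: n.

Definition RD_regular (R : nzRingType) (M : lmodType R) : Prop :=
  forall N : M -> Prop, submod N -> RD_submod N.

Definition semisimple_mod (R : nzRingType) (M : lmodType R) : Prop :=
  forall N : M -> Prop, submod N ->
    exists K : M -> Prop, [/\ submod K,
      (forall x, N x -> K x -> x = 0) &
      (forall m, exists n k, [/\ N n, K k & m = n + k])].

(* R is semilocal: R/J is semisimple (as a left R/J-module, equivalently as a
   left R-module).  Submodules of R/J correspond to left ideals I of R with
   J \subseteq I; a complement of I/J is K/J with I + K = R and I \cap K = J. *)
Definition semilocal (R : nzRingType) : Prop :=
  forall I : R -> Prop, left_ideal I -> (forall a, jacobson a -> I a) ->
    exists K : R -> Prop, [/\ left_ideal K, (forall a, jacobson a -> K a),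
      (forall x, I x -> K x -> jacobson x) &
      (forall x, exists i k, [/\ I i, K k & x = i + k])].

(* Main.v *)
Require Import Defs.
From mathcomp Require Import all_boot all_order all_algebra.
From mathcomp Require Import boolp classical_sets.
Import GRing.Theory.
Local Open Scope ring_scope.

Lemma zorn_gen (T : Type) (Q : (T -> Prop) -> Prop) (X0 : T -> Prop) :
  Q X0 ->
  (forall F : (T -> Prop) -> Prop, (forall X, F X -> Q X) -> (exists X, F X) ->
     (forall X Y, F X -> F Y -> (forall x, X x -> Y x) \/ (forall x, Y x -> X x)) ->
     Q (fun x => exists X, F X /\ X x)) ->
  exists Z, [/\ Q Z, (forall x, X0 x -> Z x) &
    forall Y, Q Y -> (forall x, Z x -> Y x) -> forall x, Y x -> Z x].
Proof.
move=> QX0 Hch.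
pose S := {X : T -> Prop | Q X /\ (forall x, X0 x -> X x)}.
pose Rl (a b : S) := `[< forall x, sval a x -> sval b x >].
have s0 : S by exists X0; split.
have [| | |z Hz] := @ZL_preorder S s0 Rl.
- by move=> t; apply/asboolP.
- by move=> r s t /asboolP H1 /asboolP H2; apply/asboolP => x /H1 /H2.
- move=> A Atot.
  have [[a Aa]|nA] := pselect (exists a, A a); last first.
    exists s0 => s As; exfalso; apply: nA; by exists s.
  have QU : Q (fun x => exists X, (exists s : S, A s /\ sval s = X) /\ X x).
    apply: Hch.
    + by move=> X [s [_ <-]]; case: s => ? [].
    + by exists (sval a), a.
    + move=> X Y [s [As <-]] [t [At <-]].
      by case: (Atot s t As At) => /asboolP H; [left|right].
  have sub : forall x, X0 x -> exists X, (exists s : S, A s /\ sval s = X) /\ X x.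
    move=> x Hx; exists (sval a); split; first by exists a.
    exact: (proj2 (svalP a) x Hx).
  exists (exist (fun X => Q X /\ (forall x, X0 x -> X x)) _ (conj QU sub)) => s As; apply/asboolP => x sx /=.
  by exists (sval s); split => //; exists s.
- case: z Hz => Z [QZ sZ] Hz; exists Z; split => // Y QY ZY x Yx.
  have sY : forall x, X0 x -> Y x by move=> y /sZ /ZY.
  have := Hz (exist _ Y (conj QY sY)).
  by move=> /(_ (asboolT ZY)) /asboolP /(_ x Yx).
Qed.

Section Main.
Variable R : nzRingType.

Lemma exists_max (L : R -> Prop) : left_ideal L -> ~ L 1 ->
  exists I, maximal_left_ideal I /\ (forall x, L x -> I x).
Proof.
move=> HL nL1.
have [|Z [[LZ nZ1] LZs Zmax]] := @zorn_gen R (fun I => left_ideal I /\ ~ I 1) L (conj HL nL1).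
  move=> F HF [X FX] Htot; split; last first.
    by move=> [X' [FX' X'1]]; case: (HF _ FX') => _; apply.
  split.
  - by exists X; split => //; case: (HF _ FX) => -[].
  - move=> x y [X1 [F1 x1]] [X2 [F2 y2]].
    case: (Htot _ _ F1 F2) => H.
    + exists X2; split => //; case: (HF _ F2) => -[_ hD _] _; apply: hD => //; exact: H.
    + exists X1; split => //; case: (HF _ F1) => -[_ hD _] _; apply: hD => //; exact: H.
  - move=> r x [X1 [F1 x1]]; exists X1; split => //.
    by case: (HF _ F1) => -[_ _ hM] _; apply: hM.
exists Z; split => //; split => // K HK ZK.
have [K1|nK1] := pselect (K 1); first by right.
left => x; split; last exact: ZK.
exact: (Zmax K (conj HK nK1) ZK).
Qed.

Lemma jac_linv (a : R) : jacobson a -> forall y, exists u, u * (1 - y * a) = 1.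
Proof.
move=> Ja y.
pose L := fun x : R => exists u, x = u * (1 - y * a).
have HL : left_ideal L.
  split.
  - by exists 0; rewrite mul0r.
  - by move=> x z [u ->] [v ->]; exists (u + v); rewrite mulrDl.
  - by move=> r x [u ->]; exists (r * u); rewrite mulrA.
have [L1|nL1] := pselect (L 1).
  by case: L1 => u Hu; exists u.
have [I [HI LI]] := exists_max L HL nL1; case: (HI) => [[I0 ID IM] nI1 _].
exfalso; apply: nI1.
have h1 : I (1 - y * a) by apply: LI; exists 1; rewrite mul1r.
have h2 : I (y * a) by apply: IM; apply: Ja.
have := ID _ _ h1 h2; by rewrite subrK.
Qed.

End Main.

Lemma part1 (R : nzRingType) (M : lmodType R) :
  RD_regular M -> forall (a : R) (m : M), jacobson a -> a *: m = 0.
Proof.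
move=> HRD a m Ja.
pose N := fun x : M => exists t : R, x = t *: (a *: m).
have HN : submod N.
  split.
  - by exists 0; rewrite scale0r.
  - by move=> x z [u ->] [v ->]; exists (u + v); rewrite scalerDl.
  - by move=> r x [u ->]; exists (r * u); rewrite scalerA.
have [n [[t ->] Ht]] := HRD N HN a (a *: m) (ex_intro _ 1 (esym (scale1r _))) (ex_intro _ m erefl).
have H1 : (a * (1 - t * a)) *: m = 0.
  by rewrite mulrBr mulr1 scalerBl -!scalerA -Ht subrr.
have [u Hu] := @jac_linv _ _ Ja t.
rewrite mulrBr mulr1 mulrA in Hu.
have E : u * t * a = u - 1 by rewrite -Hu opprB addrC subrK.
have Hb : (1 + a * u * t) * (1 - a * t) = 1.
  rewrite mulrBr mulr1 mulrDl mul1r.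
  have -> : a * u * t * (a * t) = a * (u * t * a) * t by rewrite !mulrA.
  rewrite E mulrBr mulr1 mulrBl -mulrA.
  by rewrite [a * t + _]addrC subrK addrK.
have Ha : (1 - a * t) * a = a * (1 - t * a) by rewrite mulrBl mul1r mulrBr mulr1 mulrA.
by rewrite -[a *: m]scale1r -Hb -scalerA [(1 - a * t) *: _]scalerA Ha H1 scaler0.
Qed.

Lemma part2 (R : nzRingType) (M : lmodType R) :
  (forall (a : R) (m : M), jacobson a -> a *: m = 0) ->
  semilocal R -> semisimple_mod M.
Proof.
move=> JM0 SL N [N0 ND NZ].
pose Q := fun K : M -> Prop => submod K /\ (forall x, N x -> K x -> x = 0).
have Q0 : Q (fun x => x = 0).
  split; first split.
  - by [].
  - by move=> x y -> ->; rewrite addr0.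
  - by move=> r x ->; rewrite scaler0.
  - by move=> x _ ->.
have [|K [[[K0 KD KZ] KN] _ Kmax]] := @zorn_gen M Q _ Q0.
  move=> F HF [X FX] Htot; split; first split.
  - by exists X; split => //; case: (HF _ FX) => -[].
  - move=> x y [X1 [F1 x1]] [X2 [F2 y2]].
    case: (Htot _ _ F1 F2) => H.
    + exists X2; split => //; case: (HF _ F2) => -[_ hD _] _; apply: hD => //; exact: H.
    + exists X1; split => //; case: (HF _ F1) => -[_ hD _] _; apply: hD => //; exact: H.
  - move=> r x [X1 [F1 x1]]; exists X1; split => //.
    by case: (HF _ F1) => -[_ _ hM] _; apply: hM.
  - by move=> x Nx [X1 [F1 x1]]; case: (HF _ F1) => _; apply.
exists K; split; [by split | exact: KN |].
move=> m.
pose L := fun r : R => exists n k, [/\ N n, K k & r *: m = n + k].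
have HL : left_ideal L.
  split.
  - by exists 0, 0; rewrite scale0r addr0.
  - move=> x y [n1 [k1 [N1 K1 E1]]] [n2 [k2 [N2 K2 E2]]].
    exists (n1 + n2), (k1 + k2); split; [exact: ND | exact: KD |].
    by rewrite scalerDl E1 E2 addrACA.
  - move=> r x [n1 [k1 [N1 K1 E1]]]; exists (r *: n1), (r *: k1); split; [exact: NZ | exact: KZ |].
    by rewrite -scalerA E1 scalerDr.
have JL : forall a, jacobson a -> L a.
  by move=> a Ja; exists 0, 0; rewrite JM0 // addr0.
have [K' [[K'0 K'D K'M] _ LK' dec]] := SL L HL JL.
have [l [k' [Ll K'k' E1]]] := dec 1.
have [n1 [k1 [Nn1 Kk1 El]]] := Ll.
pose K2 := fun x : M => exists k r, K k /\ x = k + (r * k') *: m.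
have QK2 : Q K2.
  split; first split.
  - by exists 0, 0; rewrite mul0r scale0r addr0.
  - move=> x y [ka [ra [Ka ->]]] [kb [rb [Kb ->]]].
    exists (ka + kb), (ra + rb); split; first exact: KD.
    by rewrite mulrDl scalerDl addrACA.
  - move=> r x [ka [ra [Ka ->]]]; exists (r *: ka), (r * ra); split; first exact: KZ.
    by rewrite scalerDr scalerA mulrA.
  - move=> x Nx [ka [ra [Ka Ex]]].
    have Lr : L (ra * k').
      exists x, (- ka); split => //; first by rewrite -scaleN1r; apply: KZ.
      by rewrite Ex addrC addKr.
    have Jr : jacobson (ra * k') by apply: LK' => //; apply: K'M.
    rewrite JM0 // addr0 in Ex; subst x; exact: KN.
have Kk' : K (k' *: m).
  apply: (Kmax K2 QK2).
  - by move=> x Kx; exists x, 0; rewrite mul0r scale0r addr0.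
  - by exists 0, 1; rewrite mul1r add0r.
exists n1, (k1 + k' *: m); split => //; first exact: KD.
by rewrite addrA -El -scalerDl -E1 scale1r.
Qed.

Theorem proposition2p1 (R : nzRingType) (M : lmodType R) :
  RD_regular M ->
  (forall (a : R) (m : M), jacobson a -> a *: m = 0) /\
  (semilocal R -> semisimple_mod M).
Proof.
move=> H; have P1 := @part1 R M H; split => //; exact: (@part2 R M).
Qed.
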